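(* Let $\mathbb{X}$ be an ACM set of $s$ distinct reduced points in $\mathbb{P}^1\times\mathbb{P}^1$ over a field $K$ of characteristic zero, with coordinates chosen so that $x_0,y_0$ is a regular sequence in $R_{\mathbb{X}}$, let $r=\#\pi_1(\mathbb{X})$, $t=\#\pi_2(\mathbb{X})$, and let $\vartheta_{\mathbb{X}}$ be its Kähler different. (a) If $r\ge2$, then $\operatorname{HF}_{\vartheta_{\mathbb{X}}}(0,j)=0$ for $j<t-1$. (b) If $t\ge2$, then $\operatorname{HF}_{\vartheta_{\mathbb{X}}}(i,0)=0$ for $i<r-1$. (c) $\vartheta_{\mathbb{X}}$ contains a non-zerodivisor of $R_{\mathbb{X}}$. (d) Let $j\in\mathbb{N}$, let $\{h_1,\dots,h_u\}$ be a bihomogeneous minimal system of generators of $\vartheta_{\mathbb{X}}$ with $\deg(h_k)=(i_k,j_k)$, and let $i_0=\max\{i_k\mid j_k\le j\}$. For $i\ge i_0$, if $\operatorname{HF}_{\vartheta_{\mathbb{X}}}(i,j)=\operatorname{HF}_{\vartheta_{\mathbb{X}}}(i+1,j)$ then $\operatorname{HF}_{\vartheta_{\mathbb{X}}}(i+1,j)=\operatorname{HF}_{\vartheta_{\mathbb{X}}}(i+2,j)$. (e) $\operatorname{HF}_{\vartheta_{\mathbb{X}}}(i,j)=s$ for all $(i,j)\succeq(2r-2,2t-2)$.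
   Context: $S=K[X_0,X_1,Y_0,Y_1]$ with $\deg X_i=(1,0)$, $\deg Y_i=(0,1)$; $\succeq$ is the componentwise order. $\pi_1(\mathbb{X})$, $\pi_2(\mathbb{X})$ are the sets of distinct first resp. second coordinates of the points. $R_{\mathbb{X}}=S/I_{\mathbb{X}}$, $x_i,y_i$ the images of $X_i,Y_i$; $\mathbb{X}$ is ACM if $R_{\mathbb{X}}$ is Cohen–Macaulay (then after linear coordinate changes $x_0,y_0$ may be assumed a regular sequence). The Kähler different $\vartheta_{\mathbb{X}}$ is the ideal of $R_{\mathbb{X}}$ generated by the residue classes of $\frac{\partial F_a}{\partial X_1}\frac{\partial F_b}{\partial Y_1}-\frac{\partial F_b}{\partial X_1}\frac{\partial F_a}{\partial Y_1}$ for a bihomogeneous generating set $F_1,\dots,F_u$ of $I_{\mathbb{X}}$ (the initial Fitting ideal of $\Omega^1_{R_{\mathbb{X}}/K[x_0,y_0]}$); $\operatorname{HF}_{\vartheta_{\mathbb{X}}}(i,j)=\dim_K(\vartheta_{\mathbb{X}})_{i,j}$. *)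

(* Defs.v *)
From mathcomp Require Import all_boot all_order all_algebra.
From mathcomp Require Import mpoly.
From Stdlib Require Import ClassicalEpsilon.

Set Implicit Arguments.
Unset Strict Implicit.
Unset Printing Implicit Defensive.

Import GRing.Theory.
Local Open Scope ring_scope.

(* S = K[X_0, X_1, Y_0, Y_1]; variable indices: X_0 = 0, X_1 = 1, Y_0 = 2, Y_1 = 3. *)
Notation S K := {mpoly K[4]}.

Definition iX0 : 'I_4 := @Ordinal 4 0 isT.
Definition iX1 : 'I_4 := @Ordinal 4 1 isT.
Definition iY0 : 'I_4 := @Ordinal 4 2 isT.
Definition iY1 : 'I_4 := @Ordinal 4 3 isT.

Definition bideg (m : 'X_{1..4}) : nat * nat :=
  ((m iX0 + m iX1)%N, (m iY0 + m iY1)%N).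

Section Defs.
Variable K : fieldType.

Definition bihomog (i j : nat) (f : S K) : bool :=
  all (fun m => bideg m == (i, j)) (msupp f).

Definition bicomp (i j : nat) (f : S K) : S K :=
  \sum_(m <- msupp f | bideg m == (i, j)) f@_m *: 'X_[m].

(* a point of P^1 x P^1 given by affine representatives (a0,a1,b0,b1),
   encoded as the evaluation vector for (X_0, X_1, Y_0, Y_1) *)
Definition pt := 'I_4 -> K.

Definition valid_pt (p : pt) : Prop :=
  ((p iX0 != 0) || (p iX1 != 0)) /\ ((p iY0 != 0) || (p iY1 != 0)).

(* same first (resp. second) projective coordinate *)
Definition same1 (p q : pt) : bool := p iX0 * q iX1 == p iX1 * q iX0.
Definition same2 (p q : pt) : bool := p iY0 * q iY1 == p iY1 * q iY0.

Definition distinct_pts (s : nat) (P : 'I_s -> pt) : Prop :=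
  (forall k, valid_pt (P k)) /\
  (forall k l, k != l -> ~~ (same1 (P k) (P l) && same2 (P k) (P l))).

(* #pi_1(X), #pi_2(X): number of distinct first/second coordinates *)
Definition card_pi1 (s : nat) (P : 'I_s -> pt) : nat :=
  #|[set k : 'I_s | [forall l : 'I_s, (l < k)%N ==> ~~ same1 (P l) (P k)]]|.
Definition card_pi2 (s : nat) (P : 'I_s -> pt) : nat :=
  #|[set k : 'I_s | [forall l : 'I_s, (l < k)%N ==> ~~ same2 (P l) (P k)]]|.

Definition IX (s : nat) (P : 'I_s -> pt) : S K -> Prop :=
  fun f => forall (k : 'I_s) (i j : nat), (bicomp i j f).@[P k] = 0.

Definition in_ideal (gs : seq (S K)) (f : S K) : Prop :=
  exists cs : 'I_(size gs) -> S K, f = \sum_(k < size gs) cs k * gs`_k.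

Definition bihom_gens_IX (s : nat) (P : 'I_s -> pt) (F : seq (S K)) : Prop :=
  (forall k : 'I_(size F), exists i j, bihomog i j F`_k) /\
  (forall k : 'I_(size F), IX P F`_k) /\
  (forall f, IX P f <-> in_ideal F f).

Definition kjac (Fa Fb : S K) : S K :=
  Fa^`M(iX1) * Fb^`M(iY1) - Fb^`M(iX1) * Fa^`M(iY1).

(* preimage in S of the Kaehler different: I_X + (kjac F_a F_b)_{a,b} *)
Definition kdiff (F : seq (S K)) : S K -> Prop :=
  fun f => in_ideal (F ++ [seq kjac Fa Fb | Fa <- F, Fb <- F]) f.

(* dim_K of (A_{i,j} + I)/I -- A, Q predicates on S; n = dim_K(A/Q) *)
Definition dim_mod (A Q : S K -> Prop) (n : nat) : Prop :=
  exists b : 'I_n -> S K,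
    (forall k, A (b k)) /\
    (forall c : 'I_n -> K, Q (\sum_k c k *: b k) -> forall k, c k = 0) /\
    (forall f, A f -> exists c : 'I_n -> K, Q (f - \sum_k c k *: b k)).

Definition dimK (A Q : S K -> Prop) : nat :=
  epsilon (inhabits 0%N) (fun n => dim_mod A Q n).

Definition HF_kdiff (s : nat) (P : 'I_s -> pt) (F : seq (S K)) (i j : nat) : nat :=
  dimK (fun f => kdiff F f /\ bihomog i j f) (IX P).

Definition x0y0_regular (s : nat) (P : 'I_s -> pt) : Prop :=
  (forall f, IX P ('X_iX0 * f) -> IX P f) /\
  (forall f, (exists g h, IX P g /\ 'X_iY0 * f = g + 'X_iX0 * h) ->
             exists g h, IX P g /\ f = g + 'X_iX0 * h) /\
  ~ (exists g h1 h2, IX P g /\ 1 = g + 'X_iX0 * h1 + 'X_iY0 * h2).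

End Defs.

(* Main.v *)
Require Import Defs.
From mathcomp Require Import all_boot all_order all_algebra.
From mathcomp Require Import mpoly.
From mathcomp Require Import zify ring.
From Stdlib Require Import ClassicalEpsilon.

Set Implicit Arguments.
Unset Strict Implicit.
Unset Printing Implicit Defensive.

Import GRing.Theory.
Local Open Scope ring_scope.


Section Bideg.
Variable K : fieldType.
Implicit Types (f g : S K) (m : 'X_{1..4}).

Lemma bidegD m1 m2 : bideg (m1 + m2)%MM =
  ((bideg m1).1 + (bideg m2).1, (bideg m1).2 + (bideg m2).2)%N.
Proof. by rewrite /bideg /= !mnmDE; congr pair; lia. Qed.

Lemma bihomogP i j f :
  bihomog i j f <-> (forall m, f@_m != 0 -> bideg m = (i, j)).
Proof.
split.
- by move=> /allP H m; rewrite -mcoeff_msupp => /H /eqP.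
- by move=> H; apply/allP => m; rewrite mcoeff_msupp => /H ->.
Qed.

Lemma bihomogP' i j f :
  bihomog i j f <-> (forall m, bideg m != (i, j) -> f@_m = 0).
Proof.
rewrite bihomogP; split=> H m.
- by move=> hm; apply/eqP; apply: contraR hm => /H ->; rewrite eqxx.
- by move=> hm; apply/eqP; apply: contraR hm => /H ->.
Qed.

Lemma bicompE i j f m :
  (bicomp i j f)@_m = if bideg m == (i, j) then f@_m else 0.
Proof.
rewrite /bicomp raddf_sum /=.
under eq_bigr do rewrite mcoeffZ mcoeffX.
rewrite big_mkcond /=.
case: (boolP (m \in msupp f)) => hm.
- rewrite (bigD1_seq m) //= ?msupp_uniq // eqxx mulr1 big1 ?addr0 //.
  by move=> m' /negbTE; rewrite eq_sym => ->; rewrite mulr0; case: ifP.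
- rewrite big1; first by case: ifP => // _; apply/esym/memN_msupp_eq0.
  move=> m' _; case: (m' =P m) => [e|]; last by rewrite /= mulr0; case: ifP.
  by move: hm; rewrite -e mcoeff_msupp negbK => /eqP ->; rewrite mul0r; case: ifP.
Qed.

Lemma bihomog0 i j : bihomog i j (0 : S K).
Proof. by apply/bihomogP => m; rewrite mcoeff0 eqxx. Qed.

Lemma bihomogD i j f g : bihomog i j f -> bihomog i j g -> bihomog i j (f + g).
Proof.
move=> /bihomogP' Hf /bihomogP' Hg; apply/bihomogP' => m hm.
by rewrite mcoeffD Hf // Hg // addr0.
Qed.

Lemma bihomogZ i j c f : bihomog i j f -> bihomog i j (c *: f).
Proof. by move=> /bihomogP' Hf; apply/bihomogP' => m hm; rewrite mcoeffZ Hf // mulr0. Qed.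

Lemma bihomogN i j f : bihomog i j f -> bihomog i j (- f).
Proof. by move=> /bihomogP' Hf; apply/bihomogP' => m hm; rewrite mcoeffN Hf // oppr0. Qed.

Lemma bihomogB i j f g : bihomog i j f -> bihomog i j g -> bihomog i j (f - g).
Proof. by move=> hf hg; apply: bihomogD => //; apply: bihomogN. Qed.

Lemma bihomog_sum i j (I : Type) (r : seq I) (p : pred I) (F : I -> S K) :
  (forall x, p x -> bihomog i j (F x)) -> bihomog i j (\sum_(x <- r | p x) F x).
Proof.
move=> H; elim/big_rec: _ => [|x y px hy]; first exact: bihomog0.
by apply: bihomogD => //; apply: H.
Qed.

Lemma bihomogX m : bihomog (bideg m).1 (bideg m).2 ('X_[m] : S K).
Proof.
apply/bihomogP => m'; rewrite mcoeffX.
by case: (m =P m') => [<-|] //=; rewrite eqxx.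
Qed.

Lemma bihomogM a b c d f g : bihomog a b f -> bihomog c d g ->
  bihomog (a + c) (b + d) (f * g).
Proof.
move=> /bihomogP Hf /bihomogP Hg; apply/bihomogP' => m hm.
rewrite mcoeffM big1 // => k /eqP hk.
have [f0|f0] := eqVneq (f@_k.1) 0; first by rewrite f0 mul0r.
have [g0|g0] := eqVneq (g@_k.2) 0; first by rewrite g0 mulr0.
exfalso; have : bideg (k.1 + k.2)%MM != (a + c, b + d)%N by rewrite -hk.
by rewrite bidegD (Hf _ f0) (Hg _ g0) /= eqxx.
Qed.

Lemma bicompD i j f g : bicomp i j (f + g) = bicomp i j f + bicomp i j g.
Proof.
by apply/mpolyP => m; rewrite mcoeffD !bicompE mcoeffD; case: ifP; rewrite ?addr0.
Qed.

Lemma bicompZ i j c f : bicomp i j (c *: f) = c *: bicomp i j f.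
Proof.
by apply/mpolyP => m; rewrite mcoeffZ !bicompE mcoeffZ; case: ifP; rewrite ?mulr0.
Qed.

Lemma bicomp0 i j : bicomp i j (0 : S K) = 0.
Proof. by apply/mpolyP => m; rewrite bicompE mcoeff0; case: ifP. Qed.

Lemma bicomp_sum i j (I : Type) (r : seq I) (p : pred I) (F : I -> S K) :
  bicomp i j (\sum_(x <- r | p x) F x) = \sum_(x <- r | p x) bicomp i j (F x).
Proof.
elim: r => [|x r IH]; rewrite ?big_nil ?big_cons ?bicomp0 //.
by case: ifP => _; rewrite ?bicompD IH.
Qed.

Lemma bihomog_bicomp i j f : bihomog i j (bicomp i j f).
Proof.
by apply/bihomogP' => m hm; rewrite bicompE (negbTE hm).
Qed.

Lemma bicomp_id i j f : bihomog i j f -> bicomp i j f = f.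
Proof.
move=> /bihomogP' H; apply/mpolyP => m; rewrite bicompE.
by case: eqP => // /eqP /H ->.
Qed.

Lemma bicomp_other i j i' j' f : bihomog i j f -> (i', j') != (i, j) ->
  bicomp i' j' f = 0.
Proof.
move=> /bihomogP H hne; apply/mpolyP => m; rewrite bicompE mcoeff0.
case: eqP => // e.
have [f0|f0] := eqVneq (f@_m) 0 => //.
by move: hne; rewrite -e (H _ f0) eqxx.
Qed.

Lemma bicompM i j a b f g : bihomog a b g ->
  bicomp i j (f * g) =
  if (a <= i)%N && (b <= j)%N then bicomp (i - a) (j - b) f * g else 0.
Proof.
move=> hg; have /bihomogP Hg := hg.
apply/mpolyP => m; rewrite bicompE.
case hab: ((a <= i)%N && (b <= j)%N).
- case/andP: hab => ha hb.
  case hm: (bideg m == (i, j)).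
  + rewrite !mcoeffM; apply: eq_bigr => k /eqP hk.
    rewrite bicompE.
    have [g0|g0] := eqVneq (g@_k.2) 0; first by rewrite g0 !mulr0.
    have : bideg (k.1 + k.2)%MM = (i, j) by rewrite -hk; apply/eqP; rewrite hm.
    rewrite bidegD (Hg _ g0); case: (bideg k.1) => u v [e1 e2].
    have -> : (u, v) = (i - a, j - b)%N by congr pair; lia.
    by rewrite eqxx.
  + have := bihomogM (bihomog_bicomp (i - a) (j - b) f) hg.
    rewrite !subnK // => /bihomogP' -> //.
    by rewrite hm.
- rewrite mcoeff0; case: eqP => // hm.
  rewrite mcoeffM big1 // => k /eqP hk.
  have [g0|g0] := eqVneq (g@_k.2) 0; first by rewrite g0 mulr0.
  have : bideg (k.1 + k.2)%MM = (i, j) by rewrite -hk.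
  rewrite bidegD (Hg _ g0) /= => -[e1 e2].
  by move: hab; rewrite -e1 -e2 !leq_addl.
Qed.

Lemma bidegU1 : bideg U_(iX1) = (1, 0)%N.
Proof. by rewrite /bideg !mnm1E. Qed.
Lemma bidegU3 : bideg U_(iY1) = (0, 1)%N.
Proof. by rewrite /bideg !mnm1E. Qed.

Lemma bihomog_dX1 a b f : bihomog a b f -> bihomog a.-1 b f^`M(iX1).
Proof.
move=> /bihomogP H; apply/bihomogP => m.
rewrite mcoeff_mderiv => hm.
have f0 : f@_(m + U_(iX1))%MM != 0.
  by apply: contraNneq hm => ->; rewrite mul0rn.
move: (H _ f0); rewrite bidegD bidegU1 /= => -[<- <-].
by rewrite addn1 addn0.
Qed.

Lemma dX1_0 b f : bihomog 0 b f -> f^`M(iX1) = 0.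
Proof.
move=> /bihomogP H; apply/mpolyP => m.
rewrite mcoeff_mderiv mcoeff0.
have [f0|f0] := eqVneq (f@_(m + U_(iX1))%MM) 0; first by rewrite f0 mul0rn.
by move: (H _ f0); rewrite bidegD bidegU1 /= addn1.
Qed.

Lemma bihomog_dY1 a b f : bihomog a b f -> bihomog a b.-1 f^`M(iY1).
Proof.
move=> /bihomogP H; apply/bihomogP => m.
rewrite mcoeff_mderiv => hm.
have f0 : f@_(m + U_(iY1))%MM != 0.
  by apply: contraNneq hm => ->; rewrite mul0rn.
move: (H _ f0); rewrite bidegD bidegU3 /= => -[<- <-].
by rewrite addn1 addn0.
Qed.

Lemma dY1_0 a f : bihomog a 0 f -> f^`M(iY1) = 0.
Proof.
move=> /bihomogP H; apply/mpolyP => m.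
rewrite mcoeff_mderiv mcoeff0.
have [f0|f0] := eqVneq (f@_(m + U_(iY1))%MM) 0; first by rewrite f0 mul0rn.
by move: (H _ f0); rewrite bidegD bidegU3 /= addn1.
Qed.

End Bideg.


Section Ideal.
Variable K : fieldType.
Implicit Types (f g : S K) (gs : seq (S K)).

Lemma in_ideal0 gs : in_ideal gs 0.
Proof. by exists (fun _ => 0); rewrite big1 // => k _; rewrite mul0r. Qed.

Lemma in_idealD gs f g : in_ideal gs f -> in_ideal gs g -> in_ideal gs (f + g).
Proof.
move=> [c1 ->] [c2 ->]; exists (fun k => c1 k + c2 k).
by rewrite -big_split /=; apply: eq_bigr => k _; rewrite mulrDl.
Qed.

Lemma in_idealM gs c f : in_ideal gs f -> in_ideal gs (c * f).
Proof.
move=> [c1 ->]; exists (fun k => c * c1 k).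
by rewrite mulr_sumr; apply: eq_bigr => k _; rewrite mulrA.
Qed.

Lemma in_idealN gs f : in_ideal gs f -> in_ideal gs (- f).
Proof. by move=> h; rewrite -mulN1r; apply: in_idealM. Qed.

Lemma in_idealB gs f g : in_ideal gs f -> in_ideal gs g -> in_ideal gs (f - g).
Proof. by move=> hf hg; apply: in_idealD => //; apply: in_idealN. Qed.

Lemma in_idealZ gs c f : in_ideal gs f -> in_ideal gs (c *: f).
Proof. by move=> h; rewrite -mul_mpolyC; apply: in_idealM. Qed.

Lemma in_ideal_sum gs (I : Type) (r : seq I) (p : pred I) (F : I -> S K) :
  (forall x, p x -> in_ideal gs (F x)) -> in_ideal gs (\sum_(x <- r | p x) F x).
Proof.
move=> H; elim/big_rec: _ => [|x y px hy]; first exact: in_ideal0.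
by apply: in_idealD => //; apply: H.
Qed.

Lemma in_ideal_gen gs x : x \in gs -> in_ideal gs x.
Proof.
move=> hx; have hi : (index x gs < size gs)%N by rewrite index_mem.
exists (fun k => if k == Ordinal hi then 1 else 0).
rewrite (bigD1 (Ordinal hi)) //= eqxx mul1r nth_index // big1 ?addr0 //.
by move=> k /negbTE ->; rewrite mul0r.
Qed.

Lemma in_ideal_sub gs gs' f : (forall x, x \in gs -> in_ideal gs' x) ->
  in_ideal gs f -> in_ideal gs' f.
Proof.
move=> H [c ->]; apply: in_ideal_sum => k _; apply: in_idealM; apply: H.
by apply: mem_nth.
Qed.

End Ideal.

Section Ev.
Variable K : fieldType.
Variable s : nat.
Variable P : 'I_s -> pt K.
Implicit Types (f g : S K).

Definition ev f : 'rV[K]_s := \row_k f.@[P k].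

Lemma evD f g : ev (f + g) = ev f + ev g.
Proof. by apply/rowP => k; rewrite !mxE mevalD. Qed.
Lemma evZ c f : ev (c *: f) = c *: ev f.
Proof. by apply/rowP => k; rewrite !mxE mevalZ. Qed.
Lemma ev0 : ev 0 = 0.
Proof. by apply/rowP => k; rewrite !mxE meval0. Qed.
Lemma evN f : ev (- f) = - ev f.
Proof. by apply/rowP => k; rewrite !mxE mevalN. Qed.
Lemma evB f g : ev (f - g) = ev f - ev g.
Proof. by rewrite evD evN. Qed.
Lemma ev_sum n (c : 'I_n -> K) (b : 'I_n -> S K) :
  ev (\sum_k c k *: b k) = \sum_k c k *: ev (b k).
Proof.
elim/big_rec2: _ => [|x y z _ H]; first exact: ev0.
by rewrite evD evZ H.
Qed.

Lemma IX0 : IX P 0.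
Proof. by move=> k i j; rewrite bicomp0 meval0. Qed.
Lemma IXD f g : IX P f -> IX P g -> IX P (f + g).
Proof. by move=> hf hg k i j; rewrite bicompD mevalD hf hg addr0. Qed.
Lemma IXZ c f : IX P f -> IX P (c *: f).
Proof. by move=> hf k i j; rewrite bicompZ mevalZ hf mulr0. Qed.
Lemma IXN f : IX P f -> IX P (- f).
Proof. by move=> hf; rewrite -scaleN1r; apply: IXZ. Qed.
Lemma IXB f g : IX P f -> IX P g -> IX P (f - g).
Proof. by move=> hf hg; apply: IXD => //; apply: IXN. Qed.

Lemma IX_bihomog i j f : bihomog i j f ->
  IX P f <-> (forall k, f.@[P k] = 0).
Proof.
move=> hf; split => [H k|H k i' j'].
- by rewrite -(bicomp_id hf); apply: H.
- have [e|ne] := eqVneq (i', j') (i, j).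
  + by case: e => -> ->; rewrite bicomp_id.
  + by rewrite (bicomp_other hf ne) meval0.
Qed.

Lemma IX_ev i j f : bihomog i j f -> IX P f <-> ev f = 0.
Proof.
move=> hf; rewrite (IX_bihomog hf); split => [H|H k].
- by apply/rowP => k; rewrite !mxE H.
- by have := congr1 (fun v : 'rV_s => v 0 k) H; rewrite !mxE.
Qed.

Definition Mof n (b : 'I_n -> S K) : 'M[K]_(n, s) := \matrix_(k, l) (b k).@[P l].

Lemma row_Mof n (b : 'I_n -> S K) k : row k (Mof b) = ev (b k).
Proof. by apply/rowP => l; rewrite !mxE. Qed.

Lemma mul_Mof n (b : 'I_n -> S K) (c : 'rV_n) :
  c *m Mof b = ev (\sum_k c 0 k *: b k).
Proof.
by rewrite mulmx_sum_row ev_sum; apply: eq_bigr => k _; rewrite row_Mof.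
Qed.

Lemma ext_free n m (M : 'M[K]_(n, m)) (v : 'rV_m) :
  row_free M -> ~~ (v <= M)%MS -> row_free (col_mx M v).
Proof.
move=> fM nv; rewrite /row_free.
have lt : (M < M + v)%MS.
  rewrite ltmxE addsmxSl /=; apply: contra nv => h.
  exact: submx_trans (addsmxSr M v) h.
have := rank_ltmx lt; rewrite (eqmx_rank (introT eqmxP (addsmxE M v))).
move: fM; rewrite /row_free => /eqP -> h.
by apply/eqP; apply: anti_leq; rewrite rank_leq_row /=; lia.
Qed.

Section Dim.
Variable A : S K -> Prop.
Variables i j : nat.
Hypothesis A0 : A 0.
Hypothesis AD : forall f g, A f -> A g -> A (f + g).
Hypothesis AZ : forall c f, A f -> A (c *: f).
Hypothesis Ah : forall f, A f -> bihomog i j f.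

Lemma A_sum n (c : 'I_n -> K) (b : 'I_n -> S K) :
  (forall k, A (b k)) -> A (\sum_k c k *: b k).
Proof.
move=> H; elim/big_rec: _ => [|x y _ hy] //.
by apply: AD => //; apply: AZ.
Qed.

Lemma exists_basis : exists n (b : 'I_n -> S K),
  [/\ forall k, A (b k), row_free (Mof b) & forall f, A f -> (ev f <= Mof b)%MS].
Proof.
suff H : forall d n (b : 'I_n -> S K), (forall k, A (b k)) -> row_free (Mof b) ->
    (s - n <= d)%N -> exists n (b : 'I_n -> S K),
    [/\ forall k, A (b k), row_free (Mof b) & forall f, A f -> (ev f <= Mof b)%MS].
  apply: (H s 0%N (fun _ => 0)); [by [] | | by rewrite subn0].
  by rewrite /row_free -leqn0 rank_leq_row.
elim=> [|d IH] n b Ab fb hd;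
  (case: (classic (forall f, A f -> (ev f <= Mof b)%MS)) => [Hall|Hn];
    first by exists n, b);
  (have [f [Af nf]] : exists f, A f /\ ~~ (ev f <= Mof b)%MS by
    apply: NNPP => H; apply: Hn => f Af; apply: NNPP => H2; apply: H;
    exists f; split => //; apply/negP);
  pose b' : 'I_(n + 1) -> S K := fun k => match split k with inl k' => b k' | inr _ => f end;
  (have Mb' : Mof b' = col_mx (Mof b) (ev f) by
    apply/matrixP => k l; rewrite !mxE /b'; case: (split k) => k'; rewrite !mxE);
  (have fb' : row_free (Mof b') by rewrite Mb'; apply: ext_free);
  (have Ab' : forall k, A (b' k) by move=> k; rewrite /b'; case: (split k)).
- exfalso; have := rank_leq_col (Mof b'); move: fb'; rewrite /row_free => /eqP ->.
  lia.
- by apply: (IH _ b') => //; lia.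
Qed.


Lemma HF_rank : exists n (M : 'M[K]_(n, s)),
  dimK A (IX P) = \rank M /\ (forall v, (v <= M)%MS <-> exists f, A f /\ v = ev f).
Proof.
have [n [b [Ab fb sb]]] := exists_basis.
have rowspace : forall v, (v <= Mof b)%MS <-> exists f, A f /\ v = ev f.
  move=> v; split.
  - move=> /submxP [c ->]; exists (\sum_k c 0 k *: b k); split.
      exact: A_sum.
    by rewrite mul_Mof.
  - by move=> [f [Af ->]]; apply: sb.
exists n, (Mof b); split => //.
have dn : dim_mod A (IX P) n.
  exists b; split => //; split.
  - move=> c hc.
    have hb : bihomog i j (\sum_k c k *: b k) by apply: Ah; apply: A_sum.
    have := (IX_ev hb).1 hc.
    have -> : \sum_k c k *: b k = \sum_k (\row_k0 c k0) 0 k *: b k.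
      by apply: eq_bigr => k _; rewrite mxE.
    rewrite -mul_Mof -(mul0mx _ (Mof b)) => /(row_free_inj fb) e k.
    by have := congr1 (fun v : 'rV_n => v 0 k) e; rewrite !mxE.
  - move=> f Af; have /submxP [c e] := sb f Af.
    exists (fun k => c 0 k).
    have hb : bihomog i j (f - \sum_k c 0 k *: b k).
      by apply: bihomogB; apply: Ah => //; apply: A_sum.
    by apply/(IX_ev hb); rewrite evB -mul_Mof -e subrr.
have uniq_dim : forall m, dim_mod A (IX P) m -> m = n.
  move=> m [b' [Ab' [ib' sb']]].
  have fb' : row_free (Mof b').
    rewrite -kermx_eq0; apply/rowV0P => v /sub_kermxP hv.
    rewrite mul_Mof in hv.
    have hb : bihomog i j (\sum_k v 0 k *: b' k) by apply: Ah; apply: A_sum.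
    have := ib' (fun k => v 0 k) ((IX_ev hb).2 hv) => h0.
    by apply/rowP => k; rewrite mxE h0.
  have s1 : (Mof b' <= Mof b)%MS.
    by apply/row_subP => k; rewrite row_Mof; apply: sb.
  have s2 : (Mof b <= Mof b')%MS.
    apply/row_subP => k; rewrite row_Mof.
    have [c hc] := sb' (b k) (Ab k).
    have hb : bihomog i j (b k - \sum_l c l *: b' l).
      by apply: bihomogB; apply: Ah => //; apply: A_sum.
    move/(IX_ev hb): hc; rewrite evB => /eqP; rewrite subr_eq0 => /eqP ->.
    have -> : \sum_l c l *: b' l = \sum_l (\row_k0 c k0) 0 l *: b' l.
      by apply: eq_bigr => l _; rewrite mxE.
    by rewrite -mul_Mof submxMl.
  move: fb fb'; rewrite /row_free => /eqP <- /eqP <-.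
  by apply/eqP; rewrite eqn_leq !mxrankS.
rewrite /row_free in fb; rewrite (eqP fb).
apply: uniq_dim; rewrite /dimK.
apply: epsilon_spec; by exists n.
Qed.

End Dim.
End Ev.


Section Pts.
Variable K : fieldType.
Variable s : nat.
Variable P : 'I_s -> pt K.
Variables u0 u1 : 'I_4.
Hypothesis u01 : u0 != u1.

Definition sameg (p q : pt K) : bool := p u0 * q u1 == p u1 * q u0.
Definition validg (p : pt K) : bool := (p u0 != 0) || (p u1 != 0).
Hypothesis hv : forall k, validg (P k).

Definition Rg : {set 'I_s} :=
  [set k : 'I_s | [forall l : 'I_s, (l < k)%N ==> ~~ sameg (P l) (P k)]].

Lemma sameg_refl p : sameg p p.
Proof. by rewrite /sameg mulrC. Qed.

Lemma sameg_sym p q : sameg p q = sameg q p.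
Proof. by rewrite /sameg eq_sym [p u1 * _]mulrC [p u0 * _]mulrC. Qed.

Lemma sameg_trans p q r : validg q -> sameg p q -> sameg q r -> sameg p r.
Proof.
rewrite /validg /sameg => vq /eqP e1 /eqP e2.
have h0 : (p u0 * r u1 - p u1 * r u0) * q u0 = 0.
  have -> : (p u0 * r u1 - p u1 * r u0) * q u0 =
     p u0 * (q u0 * r u1) - (p u1 * q u0) * r u0 by ring.
  by rewrite e2 -e1; ring.
have h1 : (p u0 * r u1 - p u1 * r u0) * q u1 = 0.
  have -> : (p u0 * r u1 - p u1 * r u0) * q u1 =
     (p u0 * q u1) * r u1 - p u1 * (q u1 * r u0) by ring.
  by rewrite -e2 e1; ring.
rewrite -subr_eq0; case/orP: vq => nz.
- by move: h0; move/eqP; rewrite mulf_eq0 (negbTE nz) orbF.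
- by move: h1; move/eqP; rewrite mulf_eq0 (negbTE nz) orbF.
Qed.

Lemma rep_exists k : exists l, l \in Rg /\ sameg (P l) (P k).
Proof.
case: (@arg_minnP _ k (fun l => sameg (P l) (P k)) (fun l => val l) (sameg_refl _)).
move=> l hl hmin; exists l; split => //.
rewrite inE; apply/forallP => l'; apply/implyP => hlt; apply/negP => hs.
have := hmin l' (sameg_trans (hv l) hs hl).
by rewrite leqNgt hlt.
Qed.

Lemma rep_uniq l l' k : l \in Rg -> l' \in Rg ->
  sameg (P l) (P k) -> sameg (P l') (P k) -> l = l'.
Proof.
move=> hl hl' s1 s2.
have s12 : sameg (P l) (P l').
  by apply: (sameg_trans (hv k)) => //; rewrite sameg_sym.
apply/val_inj; case: (ltngtP (val l) (val l')) => // hlt.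
- move: hl'; rewrite inE => /forallP /(_ l) /implyP /(_ hlt).
  by rewrite s12.
- move: hl; rewrite inE => /forallP /(_ l') /implyP /(_ hlt).
  by rewrite sameg_sym s12.
Qed.

Lemma card_rep k :
  #|[set l in Rg | sameg (P l) (P k)]| = 1%N.
Proof.
have [l0 [hl0 hs0]] := rep_exists k.
apply/eqP/cards1P; exists l0; apply/setP => l; rewrite in_set in_set1.
apply/andP/eqP => [[hl hs]|->]; last by split.
exact: (rep_uniq hl hl0 hs hs0).
Qed.

Lemma card_nrep k :
  #|[set l in Rg | ~~ sameg (P l) (P k)]| = (#|Rg| - 1)%N.
Proof.
have := cardsID [set l | sameg (P l) (P k)] Rg.
have -> : Rg :&: [set l | sameg (P l) (P k)] = [set l in Rg | sameg (P l) (P k)].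
  by apply/setP => l; rewrite in_setI !in_set.
have -> : Rg :\: [set l | sameg (P l) (P k)] = [set l in Rg | ~~ sameg (P l) (P k)].
  by apply/setP => l; rewrite in_setD !in_set andbC.
by rewrite card_rep => <-; rewrite addKn.
Qed.

Definition Lg (q : pt K) : S K := q u1 *: 'X_u0 - q u0 *: 'X_u1.

Lemma Lg_eval q p : (Lg q).@[p] = q u1 * p u0 - q u0 * p u1.
Proof. by rewrite /Lg mevalB !mevalZ !mevalXU. Qed.

Lemma Lg_eval0 q p : ((Lg q).@[p] == 0) = sameg q p.
Proof. by rewrite Lg_eval subr_eq0 /sameg eq_sym [q u1 * _]mulrC. Qed.

Lemma Lg_deriv q : (Lg q)^`M(u1) = (- q u0) *: 1.
Proof.
rewrite /Lg mderivB !mderivZ !mderivX !mnm1E (negbTE u01) eqxx scale0r.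
have -> : (U_(u1) - U_(u1))%MM = 0%MM by apply/mnmP => i; rewrite mnmBE subnn mnm0E.
by rewrite scaler0 mpolyX0 scale1r sub0r scaleNr.
Qed.

Lemma meval_prod (v : 'I_4 -> K) (I : finType) (p : pred I) (F : I -> S K) :
  (\prod_(x | p x) F x).@[v] = \prod_(x | p x) (F x).@[v].
Proof.
elim/big_rec2: _ => [|x y z _ H]; first exact: meval1.
by rewrite mevalM H.
Qed.

Definition sepg k : S K := \prod_(l in Rg | ~~ sameg (P l) (P k)) Lg (P l).
Definition fullg : S K := \prod_(l in Rg) Lg (P l).

Lemma sepg_same k k' : sameg (P k) (P k') -> (sepg k).@[P k'] != 0.
Proof.
move=> hs; rewrite /sepg meval_prod; apply/prodf_neq0 => l /andP [_ hl].
rewrite Lg_eval0; apply: contra hl => h.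
by apply: (sameg_trans (hv k')) => //; rewrite sameg_sym.
Qed.

Lemma sepg_diff k k' : ~~ sameg (P k) (P k') -> (sepg k).@[P k'] = 0.
Proof.
move=> hs; have [l [hl hl']] := rep_exists k'.
rewrite /sepg meval_prod (bigD1 l) /=; last first.
  rewrite hl /=; apply: contra hs => h.
  by apply: (sameg_trans (hv l)) => //; rewrite sameg_sym.
have h : (Lg (P l)).@[P k'] = 0 by apply/eqP; rewrite Lg_eval0.
by rewrite h mul0r.
Qed.

Lemma fullg_eval k : (fullg).@[P k] = 0.
Proof.
have [l [hl hl']] := rep_exists k.
rewrite /fullg meval_prod (bigD1 l) //=.
have h : (Lg (P l)).@[P k] = 0 by apply/eqP; rewrite Lg_eval0.
by rewrite h mul0r.
Qed.

Lemma fullg_deriv_eval k : exists l, sameg (P l) (P k) /\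
  (fullg^`M(u1)).@[P k] = - P l u0 * (sepg k).@[P k].
Proof.
have [l [hl hl']] := rep_exists k; exists l; split => //.
rewrite /fullg (bigD1 l) //= mderivM mevalD !mevalM Lg_deriv.
have h : (Lg (P l)).@[P k] = 0 by apply/eqP; rewrite Lg_eval0.
rewrite h mul0r addr0.
rewrite mevalZ meval1 mulr1; congr (_ * _); congr meval.
apply: eq_bigl => l'; case: (boolP (l' \in Rg)) => hl2 //=.
apply/idP/idP => [ne|].
- apply: contra ne => h2; apply/eqP; exact: (rep_uniq hl2 hl h2 hl').
- by apply: contraNneq => ->.
Qed.

End Pts.


Section Prod.
Variable K : fieldType.

Lemma bihomog1 : bihomog 0 0 (1 : S K).
Proof.
by rewrite -mpolyX0; have := bihomogX K 0%MM; rewrite /bideg !mnm0E.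
Qed.

Lemma bihomog_prod_seq (T : Type) (r : seq T) (F : T -> S K) a b :
  (forall x, bihomog a b (F x)) ->
  bihomog (size r * a) (size r * b) (\prod_(x <- r) F x).
Proof.
move=> H; elim: r => [|x r IH]; first by rewrite big_nil !mul0n; exact: bihomog1.
by rewrite big_cons /= !mulSn; apply: bihomogM.
Qed.

Lemma bihomog_prod (T : finType) (A : {set T}) (F : T -> S K) a b :
  (forall x, bihomog a b (F x)) ->
  bihomog (#|A| * a) (#|A| * b) (\prod_(x in A) F x).
Proof. by move=> H; rewrite -big_enum cardE; apply: bihomog_prod_seq. Qed.

Lemma bihomogXi (i : 'I_4) : bihomog (bideg U_(i)).1 (bideg U_(i)).2 ('X_i : S K).
Proof. exact: bihomogX. Qed.

Lemma bihomog_X0 : bihomog 1 0 ('X_iX0 : S K).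
Proof. by have := bihomogXi iX0; rewrite /bideg !mnm1E. Qed.
Lemma bihomog_X1 : bihomog 1 0 ('X_iX1 : S K).
Proof. by have := bihomogXi iX1; rewrite /bideg !mnm1E. Qed.
Lemma bihomog_Y0 : bihomog 0 1 ('X_iY0 : S K).
Proof. by have := bihomogXi iY0; rewrite /bideg !mnm1E. Qed.
Lemma bihomog_Y1 : bihomog 0 1 ('X_iY1 : S K).
Proof. by have := bihomogXi iY1; rewrite /bideg !mnm1E. Qed.

End Prod.

Section Fitting.
Variable K : fieldType.
Variable F : seq (S K).

Lemma kjac_in (a b : S K) : in_ideal F a -> in_ideal F b -> kdiff F (kjac a b).
Proof.
move=> [c ->] [d ->].
set J := F ++ [seq kjac Fa Fb | Fa <- F, Fb <- F].
have JF : forall k : 'I_(size F), in_ideal J F`_k.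
  by move=> k; apply: in_ideal_gen; rewrite mem_cat mem_nth.
have JK : forall k l : 'I_(size F), in_ideal J (kjac F`_k F`_l).
  move=> k l; apply: in_ideal_gen; rewrite mem_cat; apply/orP; right.
  by apply: allpairs_f; apply: mem_nth.
have dsum : forall (e : 'I_(size F) -> S K) i,
    (\sum_k e k * F`_k)^`M(i) =
    \sum_k (e k)^`M(i) * F`_k + \sum_k e k * (F`_k)^`M(i).
  move=> e i; rewrite raddf_sum -big_split /=.
  by apply: eq_bigr => k _; rewrite mderivM.
rewrite /kdiff -/J /kjac !dsum.
set UaX := \sum_k (c k)^`M(iX1) * F`_k.
set VaX := \sum_k c k * (F`_k)^`M(iX1).
set UaY := \sum_k (c k)^`M(iY1) * F`_k.
set VaY := \sum_k c k * (F`_k)^`M(iY1).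
set UbX := \sum_k (d k)^`M(iX1) * F`_k.
set VbX := \sum_k d k * (F`_k)^`M(iX1).
set UbY := \sum_k (d k)^`M(iY1) * F`_k.
set VbY := \sum_k d k * (F`_k)^`M(iY1).
have JU : forall (e : 'I_(size F) -> S K), in_ideal J (\sum_k e k * F`_k).
  by move=> e; apply: in_ideal_sum => k _; apply: in_idealM.
have -> : (UaX + VaX) * (UbY + VbY) - (UbX + VbX) * (UaY + VaY) =
   (UaX * (UbY + VbY) + UbY * VaX - UbX * (UaY + VaY) - UaY * VbX) +
   (VaX * VbY - VbX * VaY) by ring.
apply: in_idealD.
  apply: in_idealB; first apply: in_idealB; first apply: in_idealD.
  - by rewrite mulrC; apply: in_idealM; exact: (JU (fun k => (c k)^`M(iX1))).
  - by rewrite mulrC; apply: in_idealM; exact: (JU (fun k => (d k)^`M(iY1))).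
  - by rewrite mulrC; apply: in_idealM; exact: (JU (fun k => (d k)^`M(iX1))).
  - by rewrite mulrC; apply: in_idealM; exact: (JU (fun k => (c k)^`M(iY1))).
have -> : VaX * VbY - VbX * VaY =
    \sum_k \sum_l (c k * d l) * kjac F`_k F`_l.
  rewrite /VaX /VbY /VbX /VaY !mulr_suml.
  under eq_bigr do rewrite mulr_sumr.
  under [X in _ - X]eq_bigr do rewrite mulr_sumr.
  rewrite [X in _ - X]exchange_big /= -sumrB; apply: eq_bigr => k _.
  rewrite -sumrB; apply: eq_bigr => l _.
  by rewrite /kjac; ring.
by apply: in_ideal_sum => k _; apply: in_ideal_sum => l _; apply: in_idealM.
Qed.

End Fitting.


Section Main.
Variable K : fieldType.
Variable s : nat.
Variable P : 'I_s -> pt K.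
Hypothesis hP : distinct_pts P.
Hypothesis hreg : x0y0_regular P.
Variable F : seq (S K).
Hypothesis hF : bihom_gens_IX P F.

Notation R1 := (Rg P iX0 iX1).
Notation R2 := (Rg P iY0 iY1).
Notation r := #|R1|.
Notation t := #|R2|.

Lemma r_eq : card_pi1 P = r. Proof. by []. Qed.
Lemma t_eq : card_pi2 P = t. Proof. by []. Qed.

Lemma hv1 k : validg iX0 iX1 (P k). Proof. exact: (hP.1 k).1. Qed.
Lemma hv2 k : validg iY0 iY1 (P k). Proof. exact: (hP.1 k).2. Qed.

Lemma Lg1_h (q : pt K) : bihomog 1 0 (Lg iX0 iX1 q).
Proof. by apply: bihomogB; apply: bihomogZ; [exact: bihomog_X0 | exact: bihomog_X1]. Qed.
Lemma Lg2_h (q : pt K) : bihomog 0 1 (Lg iY0 iY1 q).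
Proof. by apply: bihomogB; apply: bihomogZ; [exact: bihomog_Y0 | exact: bihomog_Y1]. Qed.

Definition A1 := fullg P iX0 iX1.
Definition B2 := fullg P iY0 iY1.
Definition sep1 k := sepg P iX0 iX1 k.
Definition sep2 k := sepg P iY0 iY1 k.

Lemma A1_h : bihomog r 0 A1.
Proof.
have := @bihomog_prod K _ R1 (fun l => Lg iX0 iX1 (P l)) 1 0 (fun x => Lg1_h (P x)).
by rewrite muln1 muln0.
Qed.

Lemma B2_h : bihomog 0 t B2.
Proof.
have := @bihomog_prod K _ R2 (fun l => Lg iY0 iY1 (P l)) 0 1 (fun x => Lg2_h (P x)).
by rewrite muln1 muln0.
Qed.

Lemma sep1_h k : bihomog (r - 1) 0 (sep1 k).
Proof.
have := @bihomog_prod K _ [set l in R1 | ~~ sameg iX0 iX1 (P l) (P k)]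
   (fun l => Lg iX0 iX1 (P l)) 1 0 (fun x => Lg1_h (P x)).
rewrite muln1 muln0 (card_nrep hv1) /sep1 /sepg.
congr bihomog; apply: eq_bigl => l; by rewrite in_set.
Qed.

Lemma sep2_h k : bihomog 0 (t - 1) (sep2 k).
Proof.
have := @bihomog_prod K _ [set l in R2 | ~~ sameg iY0 iY1 (P l) (P k)]
   (fun l => Lg iY0 iY1 (P l)) 0 1 (fun x => Lg2_h (P x)).
rewrite muln1 muln0 (card_nrep hv2) /sep2 /sepg.
congr bihomog; apply: eq_bigl => l; by rewrite in_set.
Qed.

Lemma a0nz k : P k iX0 != 0.
Proof.
apply/negP => /eqP hk0.
have hb : bihomog (1 + (r - 1)) (0 + 0) ('X_iX0 * sep1 k).
  by apply: bihomogM; [exact: bihomog_X0 | exact: sep1_h].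
have : IX P ('X_iX0 * sep1 k).
  apply/(IX_bihomog P hb) => k'; rewrite mevalM mevalXU.
  case: (boolP (sameg iX0 iX1 (P k) (P k'))) => hs.
  - have v1 : P k iX1 != 0 by have := hv1 k; rewrite /validg hk0 eqxx.
    move: hs; rewrite /sameg hk0 mul0r eq_sym mulf_eq0 (negbTE v1) /=.
    by move/eqP ->; rewrite mul0r.
  - by rewrite /sep1 (sepg_diff hv1 hs) mulr0.
move/(hreg.1); have hb' := sep1_h k.
move/(IX_bihomog P hb') => /(_ k).
by apply/eqP; apply: (sepg_same hv1); apply: sameg_refl.
Qed.

Lemma b0nz k : P k iY0 != 0.
Proof.
apply/negP => /eqP hk0.
have hb : bihomog (0 + 0) (1 + (t - 1)) ('X_iY0 * sep2 k).
  by apply: bihomogM; [exact: bihomog_Y0 | exact: sep2_h].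
have hI : IX P ('X_iY0 * sep2 k).
  apply/(IX_bihomog P hb) => k'; rewrite mevalM mevalXU.
  case: (boolP (sameg iY0 iY1 (P k) (P k'))) => hs.
  - have v1 : P k iY1 != 0 by have := hv2 k; rewrite /validg hk0 eqxx.
    move: hs; rewrite /sameg hk0 mul0r eq_sym mulf_eq0 (negbTE v1) /=.
    by move/eqP ->; rewrite mul0r.
  - by rewrite /sep2 (sepg_diff hv2 hs) mulr0.
have [g [h [Ig e]]] : exists g h, IX P g /\ sep2 k = g + 'X_iX0 * h.
  apply: hreg.2.1; exists ('X_iY0 * sep2 k), 0; split => //.
  by rewrite mulr0 addr0.
have : (bicomp 0 (t - 1) (sep2 k)).@[P k] = 0.
  rewrite e bicompD mulrC (bicompM _ _ _ (bihomog_X0 K)) /= addr0.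
  exact: Ig.
rewrite bicomp_id; last exact: sep2_h.
by apply/eqP; apply: (sepg_same hv2); apply: sameg_refl.
Qed.

Definition Dd := A1^`M(iX1) * B2^`M(iY1).

Lemma Dd_h : bihomog (r - 1) (t - 1) Dd.
Proof.
have := bihomogM (bihomog_dX1 A1_h) (bihomog_dY1 B2_h).
by rewrite addn0 add0n !subn1.
Qed.

Lemma Dd_nz k : Dd.@[P k] != 0.
Proof.
rewrite /Dd mevalM.
have [l1 [_ ->]] := fullg_deriv_eval (P:=P) (u0:=iX0) (u1:=iX1) isT hv1 k.
have [l2 [_ ->]] := fullg_deriv_eval (P:=P) (u0:=iY0) (u1:=iY1) isT hv2 k.
apply: mulf_neq0; apply: mulf_neq0; rewrite ?oppr_eq0.
- exact: a0nz.
- by apply: (sepg_same hv1); apply: sameg_refl.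
- exact: b0nz.
- by apply: (sepg_same hv2); apply: sameg_refl.
Qed.

Lemma A1_IX : IX P A1.
Proof. by apply/(IX_bihomog P A1_h) => k; apply: fullg_eval hv1 k. Qed.
Lemma B2_IX : IX P B2.
Proof. by apply/(IX_bihomog P B2_h) => k; apply: fullg_eval hv2 k. Qed.

Lemma Dd_kdiff : kdiff F Dd.
Proof.
have -> : Dd = kjac A1 B2.
  by rewrite /kjac (dX1_0 B2_h) mul0r subr0.
by apply: kjac_in; apply/hF.2.2; [exact: A1_IX | exact: B2_IX].
Qed.

Lemma part_c : exists f, kdiff F f /\ forall g, IX P (f * g) -> IX P g.
Proof.
exists Dd; split; first exact: Dd_kdiff.
move=> g H k i j; have := H k (i + (r - 1))%N (j + (t - 1))%N.
rewrite mulrC (bicompM _ _ _ Dd_h) !leq_addl /= !addnK mevalM.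
by move/eqP; rewrite mulf_eq0 (negbTE (Dd_nz k)) orbF => /eqP.
Qed.

End Main.


Section Kd.
Variable K : fieldType.
Variable F : seq (S K).

Lemma kdiffD f g : kdiff F f -> kdiff F g -> kdiff F (f + g).
Proof. exact: in_idealD. Qed.
Lemma kdiffZ c f : kdiff F f -> kdiff F (c *: f).
Proof. exact: in_idealZ. Qed.
Lemma kdiffMl c f : kdiff F f -> kdiff F (c * f).
Proof. exact: in_idealM. Qed.
Lemma kdiffMr c f : kdiff F f -> kdiff F (f * c).
Proof. by rewrite mulrC; apply: in_idealM. Qed.
Lemma kdiff0 : kdiff F 0.
Proof. exact: in_ideal0. Qed.

Lemma mevalXn (v : 'I_4 -> K) (f : S K) e : (f ^+ e).@[v] = f.@[v] ^+ e.
Proof. by elim: e => [|e IH]; rewrite ?expr0 ?meval1 // !exprS mevalM IH. Qed.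

Lemma bihomog_exp a b (f : S K) e : bihomog a b f -> bihomog (e * a) (e * b) (f ^+ e).
Proof.
move=> h; elim: e => [|e IH]; first by rewrite expr0 !mul0n; apply: bihomog1.
by rewrite exprS !mulSn; apply: bihomogM.
Qed.
End Kd.

Section Main2.
Variable K : fieldType.
Variable s : nat.
Variable P : 'I_s -> pt K.
Hypothesis hP : distinct_pts P.
Hypothesis hreg : x0y0_regular P.
Variable F : seq (S K).
Hypothesis hF : bihom_gens_IX P F.

Notation R1 := (Rg P iX0 iX1).
Notation R2 := (Rg P iY0 iY1).
Notation r := #|R1|.
Notation t := #|R2|.

Definition Aij i j := fun f => kdiff F f /\ bihomog i j f.

Lemma HF_spec i j : exists n (M : 'M[K]_(n, s)),
  HF_kdiff P F i j = \rank M /\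
  (forall v, (v <= M)%MS <-> exists f, Aij i j f /\ v = ev P f).
Proof.
apply: (@HF_rank K s P (Aij i j) i j).
- by split; [exact: kdiff0 | exact: bihomog0].
- by move=> f g [? ?] [? ?]; split; [exact: kdiffD | exact: bihomogD].
- by move=> c f [? ?]; split; [exact: kdiffZ | exact: bihomogZ].
- by move=> f [].
Qed.

Lemma part_e i j : (2 * r - 2 <= i)%N -> (2 * t - 2 <= j)%N -> HF_kdiff P F i j = s.
Proof.
move=> hi hj.
have [n [M [-> Hsp]]] := HF_spec i j.
apply/eqP; rewrite eqn_leq rank_leq_col /=.
rewrite -{1}(mxrank1 K s); apply: mxrankS; apply/row_subP => k; rewrite row1.
pose g := Dd P * sep1 P k * sep2 P k * 'X_iX0 ^+ (i - (2 * r - 2)) *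
   'X_iY0 ^+ (j - (2 * t - 2)).
have gk : g.@[P k] != 0.
  rewrite /g 4!mevalM !mevalXn !mevalXU.
  repeat apply: mulf_neq0.
  - exact: (Dd_nz hP hreg).
  - by apply: (sepg_same (hv1 hP)); apply: sameg_refl.
  - by apply: (sepg_same (hv2 hP)); apply: sameg_refl.
  - by apply: expf_neq0; apply: (a0nz hP hreg).
  - by apply: expf_neq0; apply: (b0nz hP hreg).
apply/Hsp; exists ((g.@[P k])^-1 *: g); split; first split.
- apply: kdiffZ; rewrite /g; do 4 apply: kdiffMr; exact: (Dd_kdiff hP hF).
- apply: bihomogZ.
  have := bihomogM (bihomogM (bihomogM (bihomogM (Dd_h P) (sep1_h hP k)) (sep2_h hP k))
     (bihomog_exp (i - (2 * r - 2)) (bihomog_X0 K)))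
     (bihomog_exp (j - (2 * t - 2)) (bihomog_Y0 K)).
  rewrite /g; congr bihomog; lia.
- apply/rowP => l; rewrite evZ !mxE eqxx /=.
  case: (eqVneq l k) => [->|nlk]; first by rewrite ?eqxx /= mulVf.
  suff -> : g.@[P l] = 0 by rewrite mulr0.
  rewrite /g 4!mevalM.
  have := hP.2 k l; rewrite eq_sym => /(_ nlk); rewrite negb_and => /orP [h|h].
  + by rewrite /sep1 (sepg_diff (hv1 hP) h) !(mulr0, mul0r).
  + by rewrite /sep2 (sepg_diff (hv2 hP) h) !(mulr0, mul0r).
Qed.

End Main2.


Lemma rank_persist (K : fieldType) n0 n1 n2 s (M0 : 'M[K]_(n0, s)) (M1 : 'M_(n1, s))
   (M2 : 'M_(n2, s)) (D0 D1 : 'M_s) :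
  D0 \in unitmx -> D0 *m D1 = D1 *m D0 ->
  (M0 *m D0 <= M1)%MS -> (M0 *m D1 <= M1)%MS -> (M1 *m D0 <= M2)%MS ->
  (M2 <= M1 *m D0 + M1 *m D1)%MS ->
  \rank M0 = \rank M1 -> \rank M1 = \rank M2.
Proof.
move=> uD0 cD h0 h1 h2 h3 r01.
have fD0 : row_free D0 by rewrite row_free_unit.
have e1 : (M0 *m D0 == M1)%MS.
  by rewrite -(mxrank_leqif_eq h0).2 mxrankMfree // r01.
have s1 : (M1 <= M0 *m D0)%MS by case/andP: e1.
have s2 : (M1 *m D1 <= M1 *m D0)%MS.
  apply: submx_trans (submxMr D1 s1) _.
  by rewrite -mulmxA cD mulmxA; apply: submxMr.
have s3 : (M2 <= M1 *m D0)%MS.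
  by apply: submx_trans h3 _; rewrite addsmx_sub submx_refl s2.
apply/eqP; rewrite eqn_leq; apply/andP; split.
- by rewrite -(mxrankMfree M1 fD0); exact: mxrankS h2.
- by rewrite -(mxrankMfree M1 fD0); exact: mxrankS s3.
Qed.

Section Decomp.
Variable K : fieldType.

Lemma bideg_subU0 (m : 'X_{1..4}) : (0 < m iX0)%N ->
  bideg (m - U_(iX0))%MM = ((bideg m).1 - 1, (bideg m).2)%N.
Proof. by move=> h; rewrite /bideg !mnmBE !mnm1E /=; congr pair; lia. Qed.

Lemma bideg_subU1 (m : 'X_{1..4}) : m iX0 = 0%N ->
  bideg (m - U_(iX1))%MM = ((bideg m).1 - 1, (bideg m).2)%N.
Proof. by move=> h; rewrite /bideg !mnmBE !mnm1E /=; congr pair; lia. Qed.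

Lemma XsubU (i : 'I_4) (m : 'X_{1..4}) : m i != 0%N ->
  ('X_i * 'X_[m - U_(i)] : S K) = 'X_[m].
Proof.
move=> h; rewrite -mpolyXD addmC submK //.
by rewrite lep1mP.
Qed.

Lemma decompX a b (p : S K) : bihomog a.+1 b p ->
  exists u w, [/\ bihomog a b u, bihomog a b w & p = 'X_iX0 * u + 'X_iX1 * w].
Proof.
move=> hp; have /bihomogP Hp := hp.
exists (\sum_(m <- msupp p | (0 < m iX0)%N) p@_m *: 'X_[m - U_(iX0)]).
exists (\sum_(m <- msupp p | ~~ (0 < m iX0)%N) p@_m *: 'X_[m - U_(iX1)]).
split.
- rewrite big_seq_cond; apply: bihomog_sum => m /andP [hin h0]; apply: bihomogZ.
  have := bihomogX K (m - U_(iX0))%MM.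
  by rewrite (bideg_subU0 h0) (Hp m) ?subn1 //= -mcoeff_msupp.
- rewrite big_seq_cond; apply: bihomog_sum => m /andP [hin h0]; apply: bihomogZ.
  have h0' : m iX0 = 0%N by move: h0; rewrite lt0n negbK => /eqP.
  have := bihomogX K (m - U_(iX1))%MM.
  by rewrite (bideg_subU1 h0') (Hp m) ?subn1 //= -mcoeff_msupp.
- rewrite !mulr_sumr {1}[p]mpolyE (bigID (fun m : 'X_{1..4} => (0 < m iX0)%N)) /=.
  congr (_ + _); rewrite big_seq_cond [in RHS]big_seq_cond;
    apply: eq_bigr => m /andP [hm h0].
  + by rewrite -scalerAr XsubU // -lt0n.
  + rewrite -scalerAr XsubU //.
    have := Hp m; rewrite -mcoeff_msupp => /(_ hm).
    rewrite /bideg => -[e1 _]; move: h0; rewrite lt0n negbK => /eqP h0.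
    by rewrite -lt0n; lia.
Qed.
End Decomp.

Section Main3.
Variable K : fieldType.
Variable s : nat.
Variable P : 'I_s -> pt K.
Hypothesis hP : distinct_pts P.
Hypothesis hreg : x0y0_regular P.
Variable F : seq (S K).
Hypothesis hF : bihom_gens_IX P F.

Definition dX0 : 'rV[K]_s := \row_k P k iX0.
Definition dX1 : 'rV[K]_s := \row_k P k iX1.

Lemma evXi (i : 'I_4) (f : S K) :
  ev P ('X_i * f) = ev P f *m diag_mx (\row_k P k i).
Proof.
by apply/rowP => l; rewrite mul_mx_diag !mxE mevalM mevalXU mulrC.
Qed.

Lemma ev_sumg (I : Type) (r : seq I) (p : pred I) (G : I -> S K) :
  ev P (\sum_(x <- r | p x) G x) = \sum_(x <- r | p x) ev P (G x).
Proof.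
elim: r => [|x r IH]; rewrite ?big_nil ?big_cons ?ev0 //.
by case: ifP => _; rewrite ?evD IH.
Qed.

Lemma dX0_unit : diag_mx dX0 \in unitmx.
Proof.
rewrite unitmxE det_diag unitfE; apply/prodf_neq0 => k _.
by rewrite mxE; apply: (a0nz hP hreg).
Qed.

Lemma dX_comm : diag_mx dX0 *m diag_mx dX1 = diag_mx dX1 *m diag_mx dX0.
Proof.
rewrite !mulmx_diag; congr diag_mx; apply/rowP => k; rewrite !mxE; exact: mulrC.
Qed.

Lemma incl_diag n n' (M : 'M[K]_(n, s)) (M' : 'M_(n', s)) (A A' : S K -> Prop)
    (i : 'I_4) :
  (forall v, (v <= M)%MS <-> exists f, A f /\ v = ev P f) ->
  (forall v, (v <= M')%MS <-> exists f, A' f /\ v = ev P f) ->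
  (forall f, A f -> A' ('X_i * f)) ->
  (M *m diag_mx (\row_k P k i) <= M')%MS.
Proof.
move=> HM HM' HA; apply/row_subP => k; rewrite row_mul.
have [f [Af ->]] := (HM (row k M)).1 (row_sub k M).
by rewrite -evXi; apply/HM'; exists ('X_i * f); split; [apply: HA|].
Qed.

Lemma Aij_X (i' j : nat) (v : 'I_4) f : bihomog 1 0 ('X_v : S K) ->
  Aij F i' j f -> Aij F i'.+1 j ('X_v * f).
Proof.
move=> hX [kf bf]; split; first exact: kdiffMl.
by have := bihomogM hX bf; rewrite add1n add0n.
Qed.

Lemma span_step (j u : nat) (h : 'I_u -> S K) (di dj : 'I_u -> nat)
  (hh : forall k, bihomog (di k) (dj k) (h k))
  (hk : forall k, kdiff F (h k))
  (hgen : forall f, kdiff F f <-> in_ideal (F ++ [seq h k | k <- enum 'I_u]) f)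
  i' n n' (M : 'M[K]_(n, s)) (M' : 'M_(n', s)) :
  (\max_(k < u | (dj k <= j)%N) di k <= i')%N ->
  (forall v, (v <= M)%MS <-> exists f, Aij F i' j f /\ v = ev P f) ->
  (forall v, (v <= M')%MS <-> exists f, Aij F i'.+1 j f /\ v = ev P f) ->
  (M' <= M *m diag_mx dX0 + M *m diag_mx dX1)%MS.
Proof.
move=> hi0 HM HM'; apply/row_subP => k.
have [f [[kf bf] ->]] := (HM' (row k M')).1 (row_sub k M').
have [c ec] := (hgen f).1 kf.
rewrite -(bicomp_id bf) ec bicomp_sum ev_sumg; apply: summx_sub => l _.
set L := F ++ _.
have : L`_l \in L by apply: mem_nth.
rewrite mem_cat => /orP [hFl | hhl].
- set x := L`_l in hFl *.
  have [a [b [ha hI]]] : exists a b, bihomog a b x /\ IX P x.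
    have hidx : (index x F < size F)%N by rewrite index_mem.
    have := hF.1 (Ordinal hidx); have := hF.2.1 (Ordinal hidx).
    rewrite /= nth_index // => hI [a [b ha]]; by exists a, b.
  rewrite (bicompM _ _ _ ha); case: ifP => _; last by rewrite ev0 sub0mx.
  have -> : ev P (bicomp (i'.+1 - a) (j - b) (c l) * x) = 0.
    apply/rowP => q; rewrite !mxE mevalM.
    by rewrite ((IX_bihomog P ha).1 hI q) mulr0.
  exact: sub0mx.
- move/mapP: hhl => [l' _ ->].
  rewrite (bicompM _ _ _ (hh l')); case: ifP => [/andP [hdi hdj]|_];
    last by rewrite ev0 sub0mx.
  have hdi' : (di l' <= i')%N.
    by apply: leq_trans hi0; apply: leq_bigmax_cond.
  rewrite subSn //.
  have [w1 [w2 [h1 h2 ->]]] := decompX (bihomog_bicomp (i' - di l').+1 (j - dj l') (c l)).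
  rewrite mulrDl -!mulrA evD !evXi; apply: addmx_sub_adds; apply: submxMr;
    apply/HM.
  + exists (w1 * h l'); split => //; split; first exact: kdiffMl.
    by have := bihomogM h1 (hh l'); rewrite !subnK.
  + exists (w2 * h l'); split => //; split; first exact: kdiffMl.
    by have := bihomogM h2 (hh l'); rewrite !subnK.
Qed.

Lemma part_d (j u : nat) (h : 'I_u -> S K) (di dj : 'I_u -> nat) :
  (forall k, bihomog (di k) (dj k) (h k)) ->
  (forall k, kdiff F (h k)) ->
  (forall f, kdiff F f <-> in_ideal (F ++ [seq h k | k <- enum 'I_u]) f) ->
  forall i, (\max_(k < u | (dj k <= j)%N) di k <= i)%N ->
  HF_kdiff P F i j = HF_kdiff P F i.+1 j ->
  HF_kdiff P F i.+1 j = HF_kdiff P F i.+2 j.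
Proof.
move=> hh hk hgen i hi.
have [n0 [M0 [-> H0]]] := HF_spec P F i j.
have [n1 [M1 [-> H1]]] := HF_spec P F i.+1 j.
have [n2 [M2 [-> H2]]] := HF_spec P F i.+2 j.
apply: (rank_persist dX0_unit dX_comm).
- apply: (incl_diag H0 H1) => f; apply: Aij_X; exact: bihomog_X0.
- apply: (incl_diag H0 H1) => f; apply: Aij_X; exact: bihomog_X1.
- apply: (incl_diag H1 H2) => f; apply: Aij_X; exact: bihomog_X0.
- apply: (span_step hh hk hgen _ H1 H2).
  by apply: leq_trans hi _.
Qed.

End Main3.


Section Root.
Variable K : fieldType.
Variables u0 u1 : 'I_4.
Hypothesis u01 : u0 != u1.
Variable beta : nat.

Definition mk k : 'X_{1..4} := (U_(u0) *+ (beta - k) + U_(u1) *+ k)%MM.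

Lemma mk_u1 k : mk k u1 = k.
Proof. by rewrite /mk mnmDE !mulmnE !mnm1E (negbTE u01) eqxx mul0n mul1n. Qed.

Lemma mk_u0 k : mk k u0 = (beta - k)%N.
Proof. by rewrite /mk mnmDE !mulmnE !mnm1E eq_sym (negbTE u01) eqxx mul0n mul1n addn0. Qed.

Lemma mk_other k i : i != u0 -> i != u1 -> mk k i = 0%N.
Proof.
move=> h0 h1; rewrite /mk mnmDE !mulmnE !mnm1E.
by rewrite eq_sym (negbTE h0) eq_sym (negbTE h1).
Qed.

Lemma eval_mk (q : pt K) k : ('X_[mk k] : S K).@[q] = q u0 ^+ (beta - k) * q u1 ^+ k.
Proof.
rewrite mevalX (bigD1 u0) //= (bigD1 u1) /=; last by rewrite eq_sym.
rewrite big1 ?mulr1 ?mk_u0 ?mk_u1 // => i /andP [h1 h0].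
by rewrite mk_other ?expr0.
Qed.

Variable f : S K.
Hypothesis Hs : forall m, f@_m != 0 -> (m u1 <= beta)%N /\ m = mk (m u1).

Lemma expand_mk : f = \sum_(k < beta.+1) f@_(mk k) *: 'X_[mk k].
Proof.
apply/mpolyP => m; rewrite raddf_sum /=.
under eq_bigr do rewrite mcoeffZ mcoeffX.
have [f0|fn] := eqVneq (f@_m) 0.
  rewrite f0 big1 // => k _.
  by case: (mk k =P m) => [->|_]; rewrite ?f0 ?mul0r ?mulr0.
have [hle hm] := Hs fn.
have hlt : (m u1 < beta.+1)%N by [].
rewrite (bigD1 (Ordinal hlt)) //= -hm eqxx mulr1 big1 ?addr0 // => k hk.
case: (mk k =P m) => [e|_]; last by rewrite mulr0.
exfalso; move/eqP: hk; apply; apply: val_inj => /=.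
by rewrite -e mk_u1.
Qed.

Lemma meval_sum (v : 'I_4 -> K) (I : Type) (r : seq I) (p : pred I) (G : I -> S K) :
  (\sum_(x <- r | p x) G x).@[v] = \sum_(x <- r | p x) (G x).@[v].
Proof.
elim: r => [|x r IH]; rewrite ?big_nil ?big_cons ?meval0 //.
by case: ifP => _; rewrite ?mevalD IH.
Qed.

Lemma root_bound : f != 0 -> forall (I : eqType) (rs : seq I) (Q : I -> pt K),
  (forall x, x \in rs -> Q x u0 != 0 /\ f.@[Q x] = 0) ->
  uniq [seq Q x u1 / Q x u0 | x <- rs] -> (size rs <= beta)%N.
Proof.
move=> fnz I rs Q Hr hu.
pose g : {poly K} := \poly_(k < beta.+1) f@_(mk k).
have gnz : g != 0.
  apply: contra fnz => /eqP g0; rewrite expand_mk; apply/eqP; apply: big1 => k _.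
  have := coef_poly beta.+1 (fun k => f@_(mk k)) k.
  by rewrite -/g g0 coef0 ltn_ord => <-; rewrite scale0r.
have roots : all (root g) [seq Q x u1 / Q x u0 | x <- rs].
  apply/allP => z /mapP [x hq ->]; rewrite /root.
  have [q0 fq] := Hr x hq; set q := Q x in q0 fq *.
  have : f.@[q] = q u0 ^+ beta * g.[q u1 / q u0].
    rewrite {1}expand_mk meval_sum horner_poly mulr_sumr; apply: eq_bigr => k _.
    rewrite mevalZ eval_mk.
    have hk : (k <= beta)%N by rewrite -ltnS.
    have eb : q u0 ^+ beta = q u0 ^+ (beta - k) * q u0 ^+ k by rewrite -exprD subnK.
    have nz : q u0 ^+ k != 0 by rewrite expf_neq0.
    rewrite eb exprMn exprVn; field.
    exact: nz.
  rewrite fq => /esym /eqP; rewrite mulf_eq0 expf_eq0 (negbTE q0) andbF /=.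
  by [].
have := max_poly_roots gnz roots hu; rewrite size_map => h.
have := size_poly beta.+1 (fun k => f@_(mk k)); rewrite -/g => h2.
by rewrite -ltnS; apply: leq_trans h h2.
Qed.

End Root.


Lemma ord4_cases (i : 'I_4) : [\/ i = iX0, i = iX1, i = iY0 | i = iY1].
Proof.
case: i => [[|[|[|[|n]]]] hn].
- by constructor 1; apply: val_inj.
- by constructor 2; apply: val_inj.
- by constructor 3; apply: val_inj.
- by constructor 4; apply: val_inj.
- by [].
Qed.

Section Main4.
Variable K : fieldType.
Variable s : nat.
Variable P : 'I_s -> pt K.
Hypothesis hP : distinct_pts P.
Hypothesis hreg : x0y0_regular P.

Notation R1 := (Rg P iX0 iX1).
Notation R2 := (Rg P iY0 iY1).
Notation r := #|R1|.
Notation t := #|R2|.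

Lemma rootG (u0 u1 : 'I_4) (u01 : u0 != u1) (beta : nat) (y : S K)
  (hv : forall k, validg u0 u1 (P k)) (nz : forall k, P k u0 != 0) :
  (forall m, y@_m != 0 -> (m u1 <= beta)%N /\ m = mk u0 u1 beta (m u1)) ->
  (forall k, y.@[P k] = 0) -> y != 0 -> (#|Rg P u0 u1| <= beta)%N.
Proof.
move=> Hs hz ynz.
have := root_bound u01 Hs ynz (rs := enum (Rg P u0 u1)) (Q := P).
rewrite -cardE; apply.
- by move=> x _; split; [exact: nz | exact: hz].
- rewrite (map_inj_in_uniq (f := fun x => P x u1 / P x u0)) ?enum_uniq //.
  move=> x x' hx hx' /= e.
  have hs : sameg u0 u1 (P x) (P x').
    move: e; rewrite /sameg => e; apply/eqP.
    have n1 := nz x; have n2 := nz x'.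
    have := congr1 (fun z => z * P x u0 * P x' u0) e.
    rewrite mulfVK // [_ / _ * _ * _]mulrAC mulfVK // => ->; ring.
  rewrite mem_enum in hx; rewrite mem_enum in hx'.
  exact: (rep_uniq hv hx hx' hs (sameg_refl _ _ _)).
Qed.
End Main4.

Section Main5.
Variable K : fieldType.
Variable s : nat.
Variable P : 'I_s -> pt K.
Hypothesis hP : distinct_pts P.
Hypothesis hreg : x0y0_regular P.
Variable F : seq (S K).
Hypothesis hF : bihom_gens_IX P F.

Notation R1 := (Rg P iX0 iX1).
Notation R2 := (Rg P iY0 iY1).
Notation r := #|R1|.
Notation t := #|R2|.

Lemma rootY b (y : S K) : bihomog 0 b y -> IX P y -> y != 0 -> (t <= b)%N.
Proof.
move=> hy hI ynz.
apply: (rootG (u0 := iY0) (u1 := iY1) isT (hv2 hP) (b0nz hP hreg) _ _ ynz).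
- move=> m hm; have H := (bihomogP _ _ _).1 hy m hm.
  have := H; rewrite /bideg => -[e1 e2].
  split; first by lia.
  apply/mnmP => i; case: (ord4_cases i) => ->.
  + by rewrite mk_other //; lia.
  + by rewrite mk_other //; lia.
  + by rewrite mk_u0 //; lia.
  + by rewrite mk_u1.
- by apply/(IX_bihomog P hy).
Qed.

Lemma rootX a (x : S K) : bihomog a 0 x -> IX P x -> x != 0 -> (r <= a)%N.
Proof.
move=> hx hI xnz.
apply: (rootG (u0 := iX0) (u1 := iX1) isT (hv1 hP) (a0nz hP hreg) _ _ xnz).
- move=> m hm; have H := (bihomogP _ _ _).1 hx m hm.
  have := H; rewrite /bideg => -[e1 e2].
  split; first by lia.
  apply/mnmP => i; case: (ord4_cases i) => ->.
  + by rewrite mk_u0 //; lia.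
  + by rewrite mk_u1.
  + by rewrite mk_other //; lia.
  + by rewrite mk_other //; lia.
- by apply/(IX_bihomog P hx).
Qed.
End Main5.

Section Main6.
Variable K : fieldType.
Variable s : nat.
Variable P : 'I_s -> pt K.
Hypothesis hP : distinct_pts P.
Hypothesis hreg : x0y0_regular P.
Variable F : seq (S K).
Hypothesis hF : bihom_gens_IX P F.

Notation R1 := (Rg P iX0 iX1).
Notation R2 := (Rg P iY0 iY1).
Notation r := #|R1|.
Notation t := #|R2|.

Lemma bicompB i j (f g : S K) : bicomp i j (f - g) = bicomp i j f - bicomp i j g.
Proof. by rewrite bicompD -scaleN1r bicompZ scaleN1r. Qed.

Lemma termA j (x y c : S K) a1 b1 a2 b2 : bihomog a1 b1 x -> bihomog a2 b2 y ->
  IX P y -> (j < t - 1)%N -> bicomp 0 j (c * (x^`M(iX1) * y^`M(iY1))) = 0.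
Proof.
move=> hx hy hyI hj.
rewrite (bicompM _ _ _ (bihomogM (bihomog_dX1 hx) (bihomog_dY1 hy))).
case: ifP => // /andP [h1 h2].
have a20 : a2 = 0%N by lia.
rewrite a20 in hy.
case: (eqVneq y 0) => [->|ynz]; first by rewrite mderiv0 !mulr0.
have := rootY hP hreg hy hyI ynz; lia.
Qed.

Lemma termB i (x y c : S K) a1 b1 a2 b2 : bihomog a1 b1 x -> IX P x ->
  bihomog a2 b2 y -> (i < r - 1)%N -> bicomp i 0 (c * (x^`M(iX1) * y^`M(iY1))) = 0.
Proof.
move=> hx hxI hy hi.
rewrite (bicompM _ _ _ (bihomogM (bihomog_dX1 hx) (bihomog_dY1 hy))).
case: ifP => // /andP [h1 h2].
have b10 : b1 = 0%N by lia.
rewrite b10 in hx.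
case: (eqVneq x 0) => [->|xnz]; first by rewrite mderiv0 !mul0r mulr0.
have := rootX hP hreg hx hxI xnz; lia.
Qed.

Lemma F_props x : x \in F -> exists a b, bihomog a b x /\ IX P x.
Proof.
move=> hFl; have hidx : (index x F < size F)%N by rewrite index_mem.
have := hF.1 (Ordinal hidx); have := hF.2.1 (Ordinal hidx).
rewrite /= nth_index // => hI [a [b ha]]; by exists a, b.
Qed.

Lemma ev_F_term i j (c x : S K) : x \in F -> ev P (bicomp i j (c * x)) = 0.
Proof.
move=> /F_props [a [b [ha hI]]].
rewrite (bicompM _ _ _ ha); case: ifP => _; last by rewrite ev0.
apply/rowP => q; rewrite !mxE mevalM.
by rewrite ((IX_bihomog P ha).1 hI q) mulr0.
Qed.

Lemma ev_Aij_zero i j :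
  (forall c x y, x \in F -> y \in F -> bicomp i j (c * kjac x y) = 0) ->
  forall f, Aij F i j f -> ev P f = 0.
Proof.
move=> H f [[c ec] bf].
rewrite -(bicomp_id bf) ec bicomp_sum ev_sumg; apply: big1 => l _.
set L := F ++ _.
have : L`_l \in L by apply: mem_nth.
set x := L`_l.
rewrite mem_cat => /orP [hFl | /allpairsP [[x1 y1] [/= h1 h2 ->]]].
- exact: ev_F_term.
- by rewrite H ?ev0.
Qed.

Lemma rank_zero i j : (forall f, Aij F i j f -> ev P f = 0) -> HF_kdiff P F i j = 0%N.
Proof.
move=> H; have [n [M [-> HM]]] := HF_spec P F i j.
have : (M <= (0 : 'M[K]_s))%MS.
  apply/row_subP => k; have [f [Af ->]] := (HM (row k M)).1 (row_sub k M).
  by rewrite H // sub0mx.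
by move/mxrankS; rewrite mxrank0 leqn0 => /eqP.
Qed.

Lemma part_a j : (j < t - 1)%N -> HF_kdiff P F 0 j = 0%N.
Proof.
move=> hj; apply: rank_zero; apply: ev_Aij_zero => c x y hx hy.
have [a1 [b1 [hxb hxI]]] := F_props hx.
have [a2 [b2 [hyb hyI]]] := F_props hy.
rewrite /kjac mulrBr bicompB (termA _ hxb hyb hyI hj) (termA _ hyb hxb hxI hj).
by rewrite subrr.
Qed.

Lemma part_b i : (i < r - 1)%N -> HF_kdiff P F i 0 = 0%N.
Proof.
move=> hi; apply: rank_zero; apply: ev_Aij_zero => c x y hx hy.
have [a1 [b1 [hxb hxI]]] := F_props hx.
have [a2 [b2 [hyb hyI]]] := F_props hy.
rewrite /kjac mulrBr bicompB (termB _ hxb hxI hyb hi) (termB _ hyb hyI hxb hi).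
by rewrite subrr.
Qed.

End Main6.

Theorem proposition6p3 (K : fieldType) (charK0 : [pchar K] =i pred0)
    (s : nat) (P : 'I_s -> pt K) (hP : distinct_pts P)
    (hreg : x0y0_regular P)
    (F : seq (S K)) (hF : bihom_gens_IX P F) :
  let r := card_pi1 P in
  let t := card_pi2 P in
  let HF := HF_kdiff P F in
  (* (a) *)
  ((2 <= r)%N -> forall j, (j < t - 1)%N -> HF 0%N j = 0%N) /\
  (* (b) *)
  ((2 <= t)%N -> forall i, (i < r - 1)%N -> HF i 0%N = 0%N) /\
  (* (c) *)
  (exists f, kdiff F f /\ forall g, IX P (f * g) -> IX P g) /\
  (* (d) *)
  (forall (j u : nat) (h : 'I_u -> S K) (di dj : 'I_u -> nat),
     (forall k, bihomog (di k) (dj k) (h k)) ->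
     (forall k, kdiff F (h k)) ->
     (forall f, kdiff F f <-> in_ideal (F ++ [seq h k | k <- enum 'I_u]) f) ->
     (forall k, ~ in_ideal (F ++ [seq h l | l <- enum 'I_u & l != k]) (h k)) ->
     let i0 := (\max_(k < u | (dj k <= j)%N) di k)%N in
     forall i, (i0 <= i)%N -> HF i j = HF i.+1 j -> HF i.+1 j = HF i.+2 j) /\
  (* (e) *)
  (forall i j, (2 * r - 2 <= i)%N -> (2 * t - 2 <= j)%N -> HF i j = s).
Proof.
move=> r t HF; split; [|split; [|split; [|split]]].
- by move=> _ j hj; apply: (part_a hP hreg hF).
- by move=> _ i hi; apply: (part_b hP hreg hF).
- exact: (part_c hP hreg hF).
- move=> j u h di dj hh hk hgen _ i0 i hi.
  exact: (part_d hP hreg hF hh hk hgen hi).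
- by move=> i j hi hj; apply: (part_e hP hreg hF).
Qed.
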